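(* Let $\mathcal{M}=\{(x,y,z):x^2+y^2=1\}$ be the cylinder, let $G'$ be a $(2,2)$-sparse graph on vertices $v_1,\dots,v_n$ such that $v_1,\dots,v_4$ induce a proper subgraph isomorphic to $K_4$, and let $p=(p_1,\dots,p_n)\in\mathcal{M}^n$. Let $p^k=(p_1,p_2^k,p_3^k,p_4^k,p_5,\dots,p_n)\in\mathcal{M}^n$, $k=1,2,\dots$, with $p_i^k\to p_1$ as $k\to\infty$ for $i=2,3,4$, and suppose that (i) for each $k$ the framework $(K_4,(p_1,p_2^k,p_3^k,p_4^k))$ has a $2$-dimensional space of infinitesimal flexes on $\mathcal{M}$, and (ii) for each $k$ the space of infinitesimal flexes of $(G',p^k)$ on $\mathcal{M}$ has dimension greater than $2$. Then, with $p^\infty=(p_1,p_1,p_1,p_1,p_5,\dots,p_n)$, there is an infinitesimal flex $u'$ of $(G',p^\infty)$ on $\mathcal{M}$ of unit Euclidean norm of the form $u'=(0,0,0,0,u_5,\dots,u_n)$.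
   Context: A graph is $(2,2)$-sparse if every subgraph $H$ with at least one edge satisfies $|E(H)|\le 2|V(H)|-2$. For a graph with vertices $v_1,\dots,v_n$ and a (possibly degenerate, i.e. with coincident points) vector $q=(q_1,\dots,q_n)\in\mathcal{M}^n$, an infinitesimal flex of the framework $(G,q)$ on $\mathcal{M}$ is $u=(u_1,\dots,u_n)\in(\mathbb{R}^3)^n$ with each $u_i$ tangent to $\mathcal{M}$ at $q_i$ (i.e. $u_i\cdot N(q_i)=0$, where $N(q)=(2x,2y,0)$ at $q=(x,y,z)$) and $(u_i-u_j)\cdot(q_i-q_j)=0$ for every edge $v_iv_j$; equivalently $u$ lies in the kernel of the rigidity matrix $R_{\mathcal{M}}(G,q)$. *)

(* Defs.v *)
From HB Require Import structures.
From mathcomp Require Import all_boot all_order all_algebra.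
From mathcomp Require Import all_classical all_reals all_analysis.
Set Implicit Arguments. Unset Strict Implicit. Unset Printing Implicit Defensive.
Import Order.TTheory GRing.Theory Num.Theory.
Local Open Scope ring_scope.

(* Points of R^3 are row vectors 'rV[R]_3; coordinates x,y,z = entries 0,1,2. *)

Definition dot3 (R : nzRingType) (a b : 'rV[R]_3) : R := \sum_(c < 3) a 0 c * b 0 c.

Definition on_cyl (R : nzRingType) (q : 'rV[R]_3) : Prop :=
  q 0 0 ^+ 2 + q 0 1 ^+ 2 = 1.

Definition normal_cyl (R : nzRingType) (q : 'rV[R]_3) : 'rV[R]_3 :=
  \row_(c < 3) [:: 2 * q 0 0; 2 * q 0 1; 0]`_c.

(* A simple graph on vertex set 'I_n is a symmetric irreflexive relation G.
   Its edge set: unordered pairs {i,j} represented by (i,j) with i < j. *)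
Definition edges (n : nat) (G : rel 'I_n) : {set 'I_n * 'I_n} :=
  [set e : 'I_n * 'I_n | (val e.1 < val e.2)%N && G e.1 e.2].

Definition sparse22 (n : nat) (G : rel 'I_n) : Prop :=
  forall (V : {set 'I_n}) (F : {set 'I_n * 'I_n}),
    F \subset edges G ->
    (forall e, e \in F -> (e.1 \in V) && (e.2 \in V)) ->
    F != finset.set0 ->
    (#|F| <= 2 * #|V| - 2)%N.

Definition is_inf_flex (R : nzRingType) (n : nat) (G : rel 'I_n)
  (q u : 'I_n -> 'rV[R]_3) : Prop :=
  (forall i, dot3 (u i) (normal_cyl (q i)) = 0) /\
  (forall i j, G i j -> dot3 (u i - u j) (q i - q j) = 0).

Definition rig_constraints (R : nzRingType) (n : nat) (G : rel 'I_n)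
  (q : 'I_n -> 'rV[R]_3) (U : 'M[R]_(n, 3)) : 'rV[R]_(n * n + n) :=
  row_mx
    (mxvec (\matrix_(i < n, j < n)
              (if G i j then dot3 (row i U - row j U) (q i - q j) else 0)))
    (\row_(i < n) dot3 (row i U) (normal_cyl (q i))).

(* Rigidity matrix R_M(G,q) (transposed, acting on row vectors u in R^{3n},
   with extra zero rows/columns for non-edges, which do not affect the
   kernel): u *m rigidity_mx G q = rig_constraints G q (vec_mx u). *)
Definition rigidity_mx (R : nzRingType) (n : nat) (G : rel 'I_n)
  (q : 'I_n -> 'rV[R]_3) : 'M[R]_(n * 3, n * n + n) :=
  lin1_mx (fun v : 'rV[R]_(n * 3) => rig_constraints G q (vec_mx v)).

Definition flex_dim (R : fieldType) (n : nat) (G : rel 'I_n)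
  (q : 'I_n -> 'rV[R]_3) : nat :=
  \rank (kermx (rigidity_mx G q)).

Definition K4 : rel 'I_4 := fun i j => i != j.

(* Main.v *)
Require Import Defs.
From HB Require Import structures.
From mathcomp Require Import all_boot all_order all_algebra.
From mathcomp Require Import all_classical all_reals all_analysis.
From mathcomp Require Import ring lra.
Import Order.TTheory GRing.Theory Num.Theory.
Import numFieldTopology.Exports numFieldNormedType.Exports.
Local Open Scope classical_set_scope.
Local Open Scope ring_scope.
Section S.
Variable R : realType.

Lemma cvg_bigsum (I : eqType) (s : seq I) (f : I -> nat -> R) (l : I -> R) :
  (forall i, f i @ \oo --> l i) ->
  (fun k => \sum_(i <- s) f i k) @ \oo --> \sum_(i <- s) l i.
Proof.
move=> hf; elim: s => [|a s IH].
  rewrite big_nil; under eq_fun do rewrite big_nil; exact: cvg_cst.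
rewrite big_cons; under eq_fun do rewrite big_cons.
exact: cvgD.
Qed.

Lemma semicont (m N : nat) (A : nat -> 'M[R]_(m,N)) (B : 'M[R]_(m,N)) :
 (forall a b, (fun k => A k a b) @ \oo --> B a b) ->
 (forall k, exists u : 'rV_m, u != 0 /\ u *m A k = 0) ->
 exists u : 'rV_m, u != 0 /\ u *m B = 0.
Proof.
move=> hA hk.
case: (boolP (row_free B)) => hB; last first.
  rewrite -kermx_eq0 in hB.
  have [i hi] : exists i, row i (kermx B) != 0.
    apply/existsP; apply: contraR hB => /existsPn h.
    by apply/eqP/row_matrixP => i; rewrite row0; apply/eqP/negPn/h.
  exists (row i (kermx B)); split => //.
  by rewrite -row_mul mulmx_ker row0.
have [C hC] := row_freeP hB.
pose D k := 1%:M - A k *m C.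
have hD : forall a b, (fun k => D k a b) @ \oo --> 0.
  move=> a b.
  have -> : (0:R) = (B *m C) a b - \sum_c B a c * C c b.
    by rewrite !mxE subrr.
  rewrite hC.
  have -> : (fun k => D k a b) = (fun k => (1%:M : 'M[R]_m) a b - \sum_c A k a c * C c b).
    by apply/funext => k; rewrite /D !mxE.
  apply: cvgB; first exact: cvg_cst.
  apply: cvg_bigsum => c; apply: cvgMl; exact: hA.
pose d : R := (m.+1%:R)^-1.
have d0 : 0 < d by rewrite invr_gt0 ltr0n.
have hev : \forall k \near \oo, forall ab : 'I_m * 'I_m, `|D k ab.1 ab.2| < d.
  apply: filter_forall => ab.
  move: (hD ab.1 ab.2) => /cvgr_dist_lt/(_ d d0).
  by apply: filterS => k; rewrite sub0r normrN.
have [N0 _ hN] := hev.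
have [u [u0 hu]] := hk N0.
have hN0 := hN N0 (leqnn _).
have uD : u *m D N0 = u.
  by rewrite /D mulmxBr mulmx1 mulmxA hu mul0mx subr0.
pose S := \sum_a `|u 0 a|.
have S0 : 0 < S.
  have [a ha] : exists a, u 0 a != 0.
    apply/existsP; apply: contraR u0 => /existsPn h.
    by apply/eqP/rowP => a; rewrite mxE; apply/eqP/negPn/h.
  rewrite /S (bigD1 a) //=; apply: ltr_pwDl; first by rewrite normr_gt0.
  by apply: sumr_ge0.
have : S <= (m%:R * d) * S.
  have E : S = \sum_b `|(u *m D N0) 0 b| by rewrite uD.
  rewrite {1}E.
  under eq_bigr do rewrite mxE.
  apply: le_trans (ler_sum _ (fun b _ => ler_norm_sum _ _ _)) _.
  apply: (@le_trans _ _ (\sum_(b < m) \sum_(a < m) `|u 0 a| * d)).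
    apply: ler_sum => b _; apply: ler_sum => a _.
    rewrite normrM ler_wpM2l //; exact/ltW/(hN0 (a, b)).
  rewrite sumr_const card_ord -mulr_suml -/S -mulr_natl.
  by rewrite le_eqVlt; apply/orP; left; apply/eqP; ring.
have md : m%:R * d < 1.
  by rewrite /d ltr_pdivrMr ?ltr0n // mul1r ltr_nat.
move=> h; exfalso.
have : m%:R * d * S < S by rewrite -[ltRHS]mul1r ltr_pM2r.
by rewrite ltNge h.
Qed.

Lemma entry_le (a b : nat) (x : 'M[R]_(a,b)) i j : `|x i j| <= `|x|.
Proof.
change (`|x i j| <= mx_norm x); rewrite mx_normrE.
by apply/bigmax_geP; right; exists (i, j).
Qed.

Lemma coord_cvg (f : nat -> 'rV[R]_3) (v : 'rV[R]_3) c :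
  f @ \oo --> v -> (fun k => f k 0 c) @ \oo --> v 0 c.
Proof.
move=> /cvgrPdist_lt hf; apply/cvgrPdist_lt => e e0.
move: (hf e e0); apply: filterS => k; apply: le_lt_trans.
have := @entry_le _ _ (v - f k) 0 c; by rewrite !mxE.
Qed.

Lemma lin1E m n (f : 'rV[R]_m -> 'rV[R]_n)
  (hf : forall a x y, f (a *: x + y) = a *: f x + f y) u :
  u *m lin1_mx f = f u.
Proof.
have f0 : f 0 = 0.
  by have := hf (-1) 0 0; rewrite scaler0 add0r scaleN1r addNr.
have fD : forall x y, f (x + y) = f x + f y.
  by move=> x y; have := hf 1 x y; rewrite !scale1r.
have fZ : forall a x, f (a *: x) = a *: f x.
  by move=> a x; have := hf a x 0; rewrite !addr0 f0 addr0.
rewrite [in RHS](row_sum_delta u) (big_morph f fD f0).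
apply/rowP => i; rewrite mxE summxE; apply: eq_bigr => j _.
by rewrite fZ !mxE.
Qed.

Lemma dot3L (a : R) x y z : dot3 (a *: x + y) z = a * dot3 x z + dot3 y z.
Proof.
rewrite /dot3 mulr_sumr -big_split; apply: eq_bigr => c _; rewrite !mxE /=; ring.
Qed.

Lemma rcL n (G : rel 'I_n) (q : 'I_n -> 'rV[R]_3) (a : R) (U V : 'M[R]_(n,3)) :
  rig_constraints G q (a *: U + V) = a *: rig_constraints G q U + rig_constraints G q V.
Proof.
rewrite /rig_constraints scale_row_mx add_row_mx -linearP; congr row_mx.
  congr mxvec; apply/matrixP => i j; rewrite !mxE; case: (G i j); last first.
    by rewrite mulr0 addr0.
  rewrite -dot3L; congr dot3; apply/rowP => c; rewrite !mxE; ring.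
apply/rowP => i; rewrite !mxE -dot3L; congr dot3; apply/rowP => c; rewrite !mxE; ring.
Qed.

Lemma rigE n (G : rel 'I_n) (q : 'I_n -> 'rV[R]_3) (u : 'rV[R]_(n*3)) :
  u *m rigidity_mx G q = rig_constraints G q (vec_mx u).
Proof.
apply: lin1E => a x y; by rewrite linearP rcL.
Qed.

Lemma normal_cvg (qk : nat -> 'rV[R]_3) (q : 'rV[R]_3) (c : 'I_3) :
  (forall c, (fun k => qk k 0 c) @ \oo --> q 0 c) ->
  (fun k => normal_cyl (qk k) 0 c) @ \oo --> normal_cyl q 0 c.
Proof.
move=> h; rewrite /normal_cyl; under eq_fun do rewrite mxE; rewrite mxE.
case: c => [[|[|[|c]]] hc] //=; try (apply: cvgMr; exact: h).
exact: cvg_cst.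
Qed.

Lemma cvg_eq (f g : nat -> R) (l l' : R) : (forall k, f k = g k) -> l = l' ->
  g @ \oo --> l' -> f @ \oo --> l.
Proof. by move=> /funext -> ->. Qed.

Lemma dot3_cvg (x : 'rV[R]_3) (f : nat -> 'rV[R]_3) (v : 'rV[R]_3) :
  (forall c, (fun k => f k 0 c) @ \oo --> v 0 c) ->
  (fun k => dot3 x (f k)) @ \oo --> dot3 x v.
Proof.
move=> h; rewrite /dot3; apply: cvg_bigsum => c; apply: cvgMr; exact: h.
Qed.

Lemma rig_cvg n (G : rel 'I_n) (qk : nat -> 'I_n -> 'rV[R]_3) (q : 'I_n -> 'rV[R]_3) :
 (forall i c, (fun k => qk k i 0 c) @ \oo --> q i 0 c) ->
 forall a b, (fun k => rigidity_mx G (qk k) a b) @ \oo --> rigidity_mx G q a b.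
Proof.
move=> h a b; pose E := vec_mx (delta_mx 0 a : 'rV[R]_(n*3)).
case: (split_ordP b) => j ->.
  case: (mxvec_indexP j) => i i'.
  apply: (@cvg_eq _ (fun k => if G i i' then dot3 (row i E - row i' E) (qk k i - qk k i') else 0) _ (if G i i' then dot3 (row i E - row i' E) (q i - q i') else 0)).
  - by move=> k; rewrite mxE /rig_constraints row_mxEl mxvecE mxE.
  - by rewrite mxE /rig_constraints row_mxEl mxvecE mxE.
  case: (G i i'); last exact: cvg_cst.
  apply: dot3_cvg => c.
  apply: (@cvg_eq _ (fun k => qk k i 0 c - qk k i' 0 c) _ (q i 0 c - q i' 0 c)).
  - by move=> k; rewrite !mxE.
  - by rewrite !mxE.
  apply: cvgB; exact: h.
apply: (@cvg_eq _ (fun k => dot3 (row j E) (normal_cyl (qk k j))) _ (dot3 (row j E) (normal_cyl (q j)))).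
- by move=> k; rewrite mxE /rig_constraints row_mxEr mxE.
- by rewrite mxE /rig_constraints row_mxEr mxE.
apply: dot3_cvg => c; apply: normal_cvg => c'; exact: h.
Qed.

Lemma dot3Z (a : R) x z : dot3 (a *: x) z = a * dot3 x z.
Proof. rewrite /dot3 mulr_sumr; apply: eq_bigr => c _; rewrite !mxE; ring. Qed.

Lemma dot3Zr (a : R) x z : dot3 x (a *: z) = a * dot3 x z.
Proof. rewrite /dot3 mulr_sumr; apply: eq_bigr => c _; rewrite !mxE; ring. Qed.

Lemma dot3_ge0 (x : 'rV[R]_3) : 0 <= dot3 x x.
Proof. by apply: sumr_ge0 => c _; rewrite -expr2 sqr_ge0. Qed.

Lemma dot3_gt0 (x : 'rV[R]_3) c : x 0 c != 0 -> 0 < dot3 x x.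
Proof.
move=> hc; rewrite /dot3 (bigD1 c) //=; apply: ltr_pwDl.
  by rewrite -expr2 exprn_even_gt0 // hc orbT.
by apply: sumr_ge0 => c' _; rewrite -expr2 sqr_ge0.
Qed.

Lemma mxP0 m n (M : 'M[R]_(m,n)) i j : M = 0 -> M i j = 0.
Proof. by move=> ->; rewrite mxE. Qed.

Lemma restrK4 n (h4 : (4 <= n)%N) (G : rel 'I_n)
  (GK4 : forall i j : 'I_n, (val i < 4)%N -> (val j < 4)%N -> i != j -> G i j)
  (q : 'I_n -> 'rV[R]_3) (U : 'M[R]_(n,3)) :
  rig_constraints G q U = 0 ->
  rig_constraints K4 (fun i => q (widen_ord h4 i))
     (\matrix_(i < 4, c < 3) U (widen_ord h4 i) c) = 0.
Proof.
move=> /eqP; rewrite /rig_constraints row_mx_eq0 mxvec_eq0 => /andP[/eqP h1 /eqP h2].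
have rw : forall i : 'I_4, row i (\matrix_(i < 4, c < 3) U (widen_ord h4 i) c) = row (widen_ord h4 i) U.
  by move=> i; apply/rowP => c; rewrite !mxE.
apply/eqP; rewrite row_mx_eq0 mxvec_eq0; apply/andP; split; apply/eqP.
  apply/matrixP => i j; rewrite !mxE !rw.
  have := @mxP0 _ _ _ (widen_ord h4 i) (widen_ord h4 j) h1; rewrite !mxE.
  move=> H; rewrite /K4; case: ifP => // hK.
  rewrite GK4 // in H; [by case: i {hK} | by case: j {hK}].
apply/rowP => i; rewrite !mxE rw.
by have := @mxP0 _ _ _ 0 (widen_ord h4 i) h2; rewrite !mxE.
Qed.

End S.

Theorem lemma5p2 (R : realType) (n : nat) (hn : (4 < n)%N)
  (G : rel 'I_n)
  (Gsym : symmetric G) (Girr : irreflexive G)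
  (Gsp : sparse22 G)
  (GK4 : forall i j : 'I_n, (val i < 4)%N -> (val j < 4)%N -> i != j -> G i j)
  (p : 'I_n -> 'rV[R]_3) (hp : forall i, on_cyl (p i))
  (pk : nat -> 'I_n -> 'rV[R]_3)
  (hpk_cyl : forall k i, on_cyl (pk k i))
  (hpk_fix : forall k (i : 'I_n), (val i == 0)%N || (4 <= val i)%N -> pk k i = p i)
  (hpk_cvg : forall i : 'I_n, (0 < val i < 4)%N ->
     (fun k => pk k i) @ \oo --> p (Ordinal (leq_trans (isT : (0 < 5)%N) hn)))
  (hK4 : forall k, flex_dim K4 (fun i : 'I_4 => pk k (widen_ord (ltnW hn) i)) = 2%N)
  (hG : forall k, (2 < flex_dim G (pk k))%N) :
  let p1 := p (Ordinal (leq_trans (isT : (0 < 5)%N) hn)) in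
  let pinf := fun i : 'I_n => if (val i < 4)%N then p1 else p i in
  exists u : 'I_n -> 'rV[R]_3,
    is_inf_flex G pinf u /\
    (forall i : 'I_n, (val i < 4)%N -> u i = 0) /\
    \sum_(i < n) dot3 (u i) (u i) = 1.
Proof.
move=> p1 pinf.
pose Ur (u : 'rV[R]_(n*3)) : 'M[R]_(4,3) :=
  \matrix_(i < 4, c < 3) vec_mx u (widen_ord (ltnW hn) i) c.
pose P := lin1_mx (fun u : 'rV[R]_(n*3) => mxvec (Ur u)).
have hP : forall u, u *m P = mxvec (Ur u).
  move=> u; apply: lin1E => a x y; rewrite -linearP; congr mxvec.
  by apply/matrixP => i c; rewrite !mxE.
pose A q := row_mx (rigidity_mx G q) P.
have step1 : forall k, exists u : 'rV[R]_(n*3), u != 0 /\ u *m A (pk k) = 0.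
  move=> k.
  pose K := kermx (rigidity_mx G (pk k)).
  have sub : (K *m P <= kermx (rigidity_mx K4 (fun i : 'I_4 => pk k (widen_ord (ltnW hn) i))))%MS.
    rewrite sub_kermx; apply/eqP/row_matrixP => r; rewrite row0 2!row_mul hP rigE mxvecK.
    have hu : rig_constraints G (pk k) (vec_mx (row r K)) = 0.
      by rewrite -rigE -row_mul mulmx_ker row0.
    have H := (@restrK4 R n (ltnW hn) G GK4 (pk k) (vec_mx (row r K)) hu). exact H.
  have r1 := mxrank_mul_ker K P.
  have r2 := mxrankS sub.
  have hk4 := hK4 k; have hg := hG k; rewrite /flex_dim in hk4 hg.
  rewrite hk4 in r2.
  have hpos : (0 < \rank (K :&: kermx P))%N.
    rewrite -r1 in hg; rewrite lt0n; apply/eqP => e; rewrite e addn0 in hg.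
    by have := leq_ltn_trans r2 hg; rewrite ltnn.
  have X0 : (K :&: kermx P)%MS != 0 by rewrite -mxrank_eq0 -lt0n.
  have [r hr] : exists r, row r (K :&: kermx P)%MS != 0.
    apply/existsP; apply: contraR X0 => /existsPn h.
    by apply/eqP/row_matrixP => i; rewrite row0; apply/eqP/negPn/h.
  exists (row r (K :&: kermx P)%MS); split => //.
  have uK := submx_trans (row_sub r _) (capmxSl K (kermx P)).
  have uP := submx_trans (row_sub r _) (capmxSr K (kermx P)).
  rewrite sub_kermx in uK; rewrite sub_kermx in uP.
  by rewrite /A mul_mx_row (eqP uK) (eqP uP) row_mx0.
have coord : forall i c, (fun k => pk k i 0 c) @ \oo --> pinf i 0 c.
  move=> i c; rewrite /pinf.
  case: (ltnP (val i) 4) => hi.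
    case: (posnP (val i)) => hi0.
      have ei : i = Ordinal (leq_trans (isT : (0 < 5)%N) hn) by apply: val_inj.
      apply: (@cvg_eq R _ (fun=> p1 0 c)); last exact: cvg_cst.
        by move=> k; rewrite hpk_fix ?hi0 // ei.
      by [].
    by apply: coord_cvg; apply: hpk_cvg; rewrite hi0 hi.
  apply: (@cvg_eq R _ (fun=> p i 0 c)); last exact: cvg_cst.
    by move=> k; rewrite hpk_fix // hi orbT.
  by [].
have conv : forall a b, (fun k => A (pk k) a b) @ \oo --> A pinf a b.
  move=> a b; case: (split_ordP b) => j ->.
    apply: (@cvg_eq R _ (fun k => rigidity_mx G (pk k) a j) _ (rigidity_mx G pinf a j)).
    - by move=> k; rewrite /A row_mxEl.
    - by rewrite /A row_mxEl.
    exact: rig_cvg.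
  apply: (@cvg_eq R _ (fun=> P a j) _ (P a j)); last exact: cvg_cst.
  - by move=> k; rewrite /A row_mxEr.
  - by rewrite /A row_mxEr.
have [u [u0 hu]] := @semicont R _ _ _ _ conv step1.
move/eqP: hu; rewrite /A mul_mx_row row_mx_eq0 => /andP[/eqP h1 /eqP h2].
rewrite rigE in h1; rewrite hP in h2; move/eqP: h2; rewrite mxvec_eq0 => /eqP h2.
have U0 : vec_mx u != 0 by rewrite vec_mx_eq0.
set U := vec_mx u in U0 h1 h2.
pose s := \sum_(i < n) dot3 (row i U) (row i U).
have s0 : 0 < s.
  have [i hi] : exists i, row i U != 0.
    apply/existsP; apply: contraR U0 => /existsPn h.
    by apply/eqP/row_matrixP => i; rewrite row0; apply/eqP/negPn/h.
  have [c hc] : exists c, row i U 0 c != 0.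
    apply/existsP; apply: contraR hi => /existsPn h.
    by apply/eqP/rowP => c; rewrite [RHS]mxE; apply/eqP/negPn/h.
  rewrite /s (bigD1 i) //=; apply: ltr_pwDl; first exact: dot3_gt0 hc.
  by apply: sumr_ge0 => j _; apply: dot3_ge0.
pose cc := (Num.sqrt s)^-1.
exists (fun i => cc *: row i U).
split; [split|split].
- move=> i; rewrite dot3Z.
  have := @mxP0 R _ _ _ 0 (rshift _ i) h1; rewrite /rig_constraints row_mxEr !mxE => ->.
  by rewrite mulr0.
- move=> i j gij; rewrite -scalerBr dot3Z.
  have := @mxP0 R _ _ _ 0 (lshift _ (mxvec_index i j)) h1.
  rewrite /rig_constraints row_mxEl mxvecE !mxE gij => ->.
  by rewrite mulr0.
- move=> i hi; apply/rowP => c; rewrite !mxE.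
  have := @mxP0 R _ _ _ (Ordinal hi) c h2; rewrite !mxE.
  have -> : widen_ord (ltnW hn) (Ordinal hi) = i by apply: val_inj.
  by move=> ->; rewrite mulr0.
have -> : \sum_(i < n) dot3 (cc *: row i U) (cc *: row i U) = cc * cc * s.
  rewrite /s mulr_sumr; apply: eq_bigr => i _; rewrite dot3Z dot3Zr; ring.
rewrite /cc -invfM -expr2 sqr_sqrtr ?ltW //.
by rewrite mulVf // gt_eqF.
Qed.
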